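(* Let $G=(V,E)$ be an $S$-regular graph with cells $V_1,\dots,V_k$, $n_i=|V_i|$, and let $C\subsetneq V$. Put $c_i=|C\cap V_i|/n_i$. Let $A_{\bar C}$ be the adjacency matrix of the subgraph of $G$ induced by $V\setminus C$. Then the maximum eigenvalue of $A_{\bar C}$ is at most \[\lambda_S\Bigl(1-\min_{1\le i\le k}c_i\Bigr)+\lambda_B\Bigl(\min_{1\le i\le k}c_i\Bigr).\]
   Context: All graphs are simple, undirected and connected. $G$ is $S$-regular ($S=(s_{ij})$ a $k\times k$ nonnegative integer matrix) if $V$ is partitioned into nonempty cells $V_1,\dots,V_k$ such that every vertex of $V_i$ has exactly $s_{ij}$ neighbours in $V_j$. Let $A$ be the adjacency matrix of $G$, $|V|=n>k$. The matrix $S$ is diagonalizable with real eigenvalues $\lambda_{S_1},\dots,\lambda_{S_k}$ (with multiplicity); the subspace $W=\mathrm{span}\{\mathbf{1}_{V_1},\dots,\mathbf{1}_{V_k}\}$ is $A$-invariant and the eigenvalues of $A$ on $W$ are exactly $\lambda_{S_1},\dots,\lambda_{S_k}$ (the $S$-eigenvalues). The remaining $n-k$ eigenvalues of $A$ (those of $A$ restricted to $W^\perp$) are the bulk eigenvalues. $\lambda_S$ is the largest eigenvalue of $S$ and $\lambda_B$ is the largest absolute value of a bulk eigenvalue. *)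

(* Defs.v *)
From HB Require Import structures.
From mathcomp Require Import all_boot all_order all_algebra.
From mathcomp Require Import reals.
Set Implicit Arguments. Unset Strict Implicit. Unset Printing Implicit Defensive.
Import Order.TTheory GRing.Theory Num.Theory.
Local Open Scope ring_scope.

Definition simple_graph (V : finType) (e : rel V) : Prop :=
  irreflexive e /\ symmetric e.
Definition connected_graph (V : finType) (e : rel V) : Prop :=
  forall x y : V, connect e x y.

(* S-regularity: the partition is given by cell : V -> 'I_k (cells V_i =
   cell^-1 i), all cells nonempty, and every vertex of V_i has exactly
   S i j neighbours in V_j. *)
Definition S_regular (V : finType) (e : rel V) (k : nat)
    (cell : V -> 'I_k) (S : 'M[nat]_k) : Prop :=
  (forall i : 'I_k, exists x : V, cell x = i) /\
  (forall (x : V) (j : 'I_k), #|[set y | e x y & cell y == j]| = S (cell x) j).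

Definition adj_on (R : realType) (V : finType) (e : rel V) (D : {set V}) :
    'M[R]_#|D| :=
  \matrix_(i, j) (e (@enum_val V (mem D) i) (@enum_val V (mem D) j))%:R.

Definition adjmx (R : realType) (V : finType) (e : rel V) : 'M[R]_#|[set: V]| :=
  adj_on R e [set: V].

Definition cell_ind (R : realType) (V : finType) (k : nat) (cell : V -> 'I_k)
    (j : 'I_k) : 'rV[R]_#|[set: V]| :=
  \row_i (cell (@enum_val V (mem [set: V]) i) == j)%:R.

(* Bulk eigenvalue: eigenvalue of A restricted to W^perp, i.e. with an
   eigenvector orthogonal to all cell indicator vectors. *)
Definition bulk_eigenvalue (R : realType) (V : finType) (e : rel V) (k : nat)
    (cell : V -> 'I_k) (mu : R) : Prop :=
  exists v : 'rV[R]_#|[set: V]|,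
    [/\ v != 0, v *m adjmx R e = mu *: v &
        forall j : 'I_k, v *m (cell_ind R cell j)^T = 0].

Definition largest_eigenvalue (R : realType) (k : nat) (M : 'M[R]_k) (l : R) : Prop :=
  eigenvalue M l /\ forall m : R, eigenvalue M m -> m <= l.

Definition largest_abs_bulk (R : realType) (V : finType) (e : rel V) (k : nat)
    (cell : V -> 'I_k) (l : R) : Prop :=
  (exists mu, bulk_eigenvalue e cell mu /\ `|mu| = l) /\
  forall mu, bulk_eigenvalue e cell mu -> `|mu| <= l.

Definition cfrac (R : realType) (V : finType) (k : nat) (cell : V -> 'I_k)
    (C : {set V}) (i : 'I_k) : R :=
  (#|C :&: [set x | cell x == i]|)%:R / (#|[set x | cell x == i]|)%:R.

(* min over i of c_i (k >= 1 whenever V is nonempty; all c_i <= 1). *)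
Definition cmin (R : realType) (V : finType) (k : nat) (cell : V -> 'I_k)
    (C : {set V}) : R :=
  \big[Num.min/1]_(i < k) cfrac R cell C i.

(* Main.v *)
Require Import Defs.
From HB Require Import structures.
From mathcomp Require Import all_boot all_order all_algebra.
From mathcomp Require Import reals.
From mathcomp Require Import all_classical all_reals all_analysis.
From mathcomp Require Import ring lra.
Import Order.TTheory GRing.Theory Num.Theory.
Import numFieldNormedType.Exports.
Set Implicit Arguments. Unset Strict Implicit. Unset Printing Implicit Defensive.
Local Open Scope ring_scope.

Section An.
Variable R : realType.

Definition nrm n (u : 'rV[R]_n) : R := (u *m u^T) 0 0.
Definition qf n (A : 'M[R]_n) (u : 'rV[R]_n) : R := (u *m A *m u^T) 0 0.

Lemma cont_sum n (I : finType) (F : I -> 'rV[R]_n -> R) :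
  (forall i, continuous (F i)) -> continuous (fun u => \sum_i F i u).
Proof.
move=> cF.
suff H : forall s : seq I, continuous (fun u => \sum_(i <- s) F i u) by apply: H.
elim=> [|i s IH].
  have -> : (fun u : 'rV[R]_n => \sum_(i <- [::]) F i u) = fun _ => 0.
    by apply: funext => u; rewrite big_nil.
  exact: cst_continuous.
have -> : (fun u => \sum_(j <- i :: s) F j u) = (F i + fun u => \sum_(j <- s) F j u)%R.
  by apply: funext => u; rewrite big_cons.
by move=> x; apply: continuousD; [apply: cF | apply: IH].
Qed.

Lemma cont_coord n (i : 'I_n) : continuous (fun u : 'rV[R]_n => u 0 i).
Proof. exact: coord_continuous. Qed.

Lemma cont_mul n (f g : 'rV[R]_n -> R) : continuous f -> continuous g ->
  continuous (fun u => f u * g u).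
Proof. by move=> cf cg x; exact: (continuousM (cf x) (cg x)). Qed.

Lemma cont_nrm n : continuous (@nrm n).
Proof.
have -> : @nrm n = fun u => \sum_i (u 0 i * u 0 i).
  by apply: funext => u; rewrite /nrm !mxE; apply: eq_bigr => i _; rewrite mxE.
by apply: cont_sum => i; apply: cont_mul; apply: cont_coord.
Qed.

Lemma cont_qf n (A : 'M[R]_n) : continuous (qf A).
Proof.
have -> : qf A = fun u => \sum_j (\sum_i (u 0 i * A i j)) * u 0 j.
  apply: funext => u; rewrite /qf !mxE; apply: eq_bigr => j _.
  by rewrite !mxE.
apply: cont_sum => j; apply: cont_mul; last exact: cont_coord.
by apply: cont_sum => i; apply: cont_mul; [exact: cont_coord| exact: cst_continuous].
Qed.

Lemma cont_lin n m (P : 'M[R]_(n, m)) j : continuous (fun u : 'rV[R]_n => (u *m P) 0 j).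
Proof.
have -> : (fun u : 'rV[R]_n => (u *m P) 0 j) = fun u => \sum_i (u 0 i * P i j).
  by apply: funext => u; rewrite mxE.
by apply: cont_sum => i; apply: cont_mul; [exact: cont_coord| exact: cst_continuous].
Qed.

Lemma nrm_entry n (u : 'rV[R]_n) i : nrm u = 1 -> `|u 0 i| <= 1.
Proof.
move=> h.
have : u 0 i ^+ 2 <= 1.
  rewrite -h /nrm mxE (bigD1 i) //= mxE -expr2 lerDl.
  by apply: sumr_ge0 => j _; rewrite mxE -expr2 sqr_ge0.
by rewrite -real_normK ?num_real // expr_le1.
Qed.

Lemma max_exists n m (A : 'M[R]_n) (P : 'M[R]_(n, m)) (u0 : 'rV[R]_n) :
  u0 *m P = 0 -> nrm u0 = 1 ->
  exists2 v, (v *m P = 0 /\ nrm v = 1) &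
    forall u, u *m P = 0 -> nrm u = 1 -> qf A u <= qf A v.
Proof.
move=> u0P u0n.
pose K := [set u : 'rV[R]_n | (forall j, (u *m P) 0 j = 0) /\ nrm u = 1]%classic.
have Kcl : closed K.
  have -> : K = ((\bigcap_(j in [set: 'I_m]) ((fun u : 'rV[R]_n => (u *m P) 0 j) @^-1` [set 0]))
      `&` (@nrm n @^-1` [set 1]))%classic.
    apply/seteqP; split => u /=.
      by case=> h1 h2; split => // j _; apply: h1.
    by case=> h1 h2; split => // j; apply: h1.
  apply: closedI.
    apply: closed_bigI => j _.
    exact: (proj1 (continuous_closedP _) (@cont_lin n m P j) [set 0]%classic (@closed_eq R 0)).
  exact: (proj1 (continuous_closedP _) (@cont_nrm n) [set 1]%classic (@closed_eq R 1)).
have Kco : compact K.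
  have Mnco : compact
      [set v : 'rV[R]_n | forall i, v ord0 i \in `[(-1 : R), 1]%R]%classic.
    apply: (@rV_compact _  _ (fun=> `[(-1 : R), 1]%classic)).
    by move=> _; apply: segment_compact.
  apply: (subclosed_compact Kcl Mnco).
  move=> u [_ hu] i /=; rewrite in_itv /= -ler_norml; exact: nrm_entry.
have K0 : (K !=set0)%classic.
  by exists u0; split => // j; rewrite u0P mxE.
have [v vK vmax] := compact_EVT_max K0 Kco (continuous_subspaceT (@cont_qf n A)).
move: vK; rewrite inE => -[vP vn].
exists v.
  by split => //; apply/rowP => j; rewrite vP mxE.
move=> u uP un; apply: vmax; rewrite inE; split => //.
by move=> j; rewrite uP mxE.
Qed.


Lemma nrmE n (u : 'rV[R]_n) : nrm u = \sum_i u 0 i ^+ 2.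
Proof. by rewrite /nrm mxE; apply: eq_bigr => i _; rewrite mxE expr2. Qed.

Lemma nrm_ge0 n (u : 'rV[R]_n) : 0 <= nrm u.
Proof. by rewrite nrmE; apply: sumr_ge0 => i _; apply: sqr_ge0. Qed.

Lemma nrm_eq0 n (u : 'rV[R]_n) : (nrm u == 0) = (u == 0).
Proof.
apply/idP/idP; last by move/eqP->; rewrite nrmE big1 // => i _; rewrite mxE expr0n.
rewrite nrmE psumr_eq0; last by move=> i _; apply: sqr_ge0.
move/allP => h; apply/eqP/rowP => i; rewrite mxE.
by have := h i (mem_index_enum i); rewrite /= sqrf_eq0 => /eqP.
Qed.

Lemma nrm_gt0 n (u : 'rV[R]_n) : u != 0 -> 0 < nrm u.
Proof. by move=> h; rewrite lt_def nrm_eq0 h nrm_ge0. Qed.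

Lemma nrmZ n (c : R) (u : 'rV[R]_n) : nrm (c *: u) = c ^+ 2 * nrm u.
Proof. by rewrite /nrm linearZ /= -scalemxAl -scalemxAr !mxE mulrA expr2. Qed.

Lemma qfZ n (A : 'M[R]_n) (c : R) (u : 'rV[R]_n) : qf A (c *: u) = c ^+ 2 * qf A u.
Proof. by rewrite /qf linearZ /= -!scalemxAl -scalemxAr !mxE mulrA expr2. Qed.

Lemma bil_sym n (A : 'M[R]_n) (u v : 'rV[R]_n) : A^T = A ->
  (u *m A *m v^T) 0 0 = (v *m A *m u^T) 0 0.
Proof.
move=> sA.
have E : (u *m A *m v^T) 0 0 = ((u *m A *m v^T)^T) 0 0 by rewrite [RHS]mxE.
rewrite E.
by rewrite !trmx_mul trmxK sA mulmxA.
Qed.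

Lemma addE m1 m2 (M N : 'M[R]_(m1, m2)) i j : (M + N) i j = M i j + N i j.
Proof. by rewrite mxE. Qed.
Lemma scalE m1 m2 c (M : 'M[R]_(m1, m2)) i j : (c *: M) i j = c * M i j.
Proof. by rewrite mxE. Qed.

Lemma oppE m1 m2 (M : 'M[R]_(m1, m2)) i j : (- M) i j = - M i j.
Proof. by rewrite mxE. Qed.

Lemma qfD n (A : 'M[R]_n) (u v : 'rV[R]_n) : A^T = A ->
  qf A (u + v) = qf A u + 2 * (u *m A *m v^T) 0 0 + qf A v.
Proof.
move=> sA; rewrite /qf linearD /= !mulmxDl !mulmxDr !addE (bil_sym v u sA).
by rewrite mulr2n mulrDl mul1r !addrA.
Qed.

Lemma nrmD n (u v : 'rV[R]_n) :
  nrm (u + v) = nrm u + 2 * (u *m v^T) 0 0 + nrm v.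
Proof.
rewrite /nrm; have := @qfD n 1%:M u v (trmx1 _ _); rewrite /qf !mulmx1 => ->.
by [].
Qed.



Lemma maxeig n m (A : 'M[R]_n) (P : 'M[R]_(n, m)) (l : R) (y : 'rV[R]_n) :
  A^T = A -> (forall u : 'rV[R]_n, u *m P = 0 -> u *m A *m P = 0) ->
  (forall u : 'rV[R]_n, u *m P = 0 -> qf A u <= l * nrm u) ->
  y *m P = 0 -> qf A y = l * nrm y -> y *m A = l *: y.
Proof.
move=> sA inv bnd yP qy.
pose g := y *m A - l *: y.
have gP : g *m P = 0 by rewrite mulmxBl -scalemxAl inv // yP scaler0 subr0.
pose a := (y *m A *m g^T) 0 0; pose b := (y *m g^T) 0 0.
have hab : a - l * b = nrm g.
  rewrite /nrm.
  have -> : g *m g^T = y *m A *m g^T - l *: (y *m g^T).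
    by rewrite {1}/g mulmxBl -scalemxAl.
  by rewrite addE oppE scalE.
have key : forall t, 0 < t -> 2 * nrm g + t * (qf A g - l * nrm g) <= 0.
  move=> t t0.
  have := bnd (y + t *: g).
  rewrite mulmxDl -scalemxAl yP gP scaler0 addr0 => /(_ erefl).
  rewrite qfD // nrmD qfZ nrmZ qy linearZ /= -!scalemxAr !scalE -/a -/b.
  move=> H.
  have H2 : t * (2 * nrm g + t * (qf A g - l * nrm g)) <= 0.
    rewrite -{1}hab.
    have -> : t * (2 * (a - l * b) + t * (qf A g - l * nrm g)) =
      (l * nrm y + 2 * (t * a) + t ^+ 2 * qf A g) -
      l * (nrm y + 2 * (t * b) + t ^+ 2 * nrm g) by ring.
    by rewrite subr_le0.
  by rewrite -(pmulr_rle0 _ t0).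
have ng0 : nrm g <= 0.
  rewrite leNgt; apply/negP => ngp.
  pose B := qf A g - l * nrm g.
  pose t := nrm g / (`|B| + 1).
  have Bp : 0 < `|B| + 1 by rewrite ltr_wpDl.
  have tp : 0 < t by rewrite divr_gt0.
  have := key t tp; rewrite -/B.
  have tB : t * `|B| <= nrm g.
    rewrite /t mulrAC ler_pdivrMr // ler_pM2l //; lra.
  have : - (t * `|B|) <= t * B.
    by rewrite -mulrN ler_pM2l // lerNl -normrN ler_norm.
  lra.
have : g = 0 by apply/eqP; rewrite -nrm_eq0 eq_le ng0 nrm_ge0.
by move/eqP; rewrite subr_eq0 => /eqP.
Qed.


Lemma sqc n (u : 'rV[R]_n) : ((Num.sqrt (nrm u))^-1) ^+ 2 = (nrm u)^-1.
Proof. by rewrite exprVn sqr_sqrtr // nrm_ge0. Qed.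

Lemma rayleigh n m (A : 'M[R]_n) (P : 'M[R]_(n, m)) : A^T = A ->
  (forall u : 'rV[R]_n, u *m P = 0 -> u *m A *m P = 0) ->
  exists l : R, (forall u : 'rV[R]_n, u *m P = 0 -> qf A u <= l * nrm u) /\
    ((exists2 u : 'rV[R]_n, u *m P = 0 & u != 0) ->
     exists v : 'rV[R]_n, [/\ v *m P = 0, v != 0 & v *m A = l *: v]).
Proof.
move=> sA inv.
case: (pselect (exists2 u : 'rV[R]_n, u *m P = 0 & u != 0)) => [[u0 u0P u0n]|no].
  have np := nrm_gt0 u0n.
  have h1 : ((Num.sqrt (nrm u0))^-1 *: u0) *m P = 0.
    by rewrite -scalemxAl u0P scaler0.
  have h2 : nrm ((Num.sqrt (nrm u0))^-1 *: u0) = 1.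
    by rewrite nrmZ sqc mulVf // gt_eqF.
  have [v [vP vn] vmax] := max_exists A h1 h2.
  have bnd : forall u : 'rV[R]_n, u *m P = 0 -> qf A u <= qf A v * nrm u.
    move=> u uP; have [->|un] := eqVneq u 0.
      by rewrite /qf /nrm !mul0mx !mxE mulr0.
    have unp := nrm_gt0 un.
    have := vmax ((Num.sqrt (nrm u))^-1 *: u).
    rewrite -scalemxAl uP scaler0 nrmZ qfZ sqc mulVf ?gt_eqF // => /(_ erefl erefl).
    by rewrite mulrC ler_pdivrMr.
  exists (qf A v); split => // _; exists v; split => //.
    by apply/eqP => v0; move: vn; rewrite v0 /nrm mul0mx mxE => /eqP; rewrite eq_sym oner_eq0.
  by apply: (maxeig sA inv bnd vP); rewrite vn mulr1.
exists 0; split.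
  move=> u uP; have [u0|un] := eqVneq u 0.
    by rewrite u0 /qf /nrm !mul0mx !mxE mulr0.
  by case: no; exists u.
by move=> h; case: no.
Qed.

End An.

Section Graph.
Variables (R : realType) (V : finType) (e : rel V) (k : nat) (cell : V -> 'I_k) (S : 'M[nat]_k).
Hypothesis esym : symmetric e.
Hypothesis Sreg : S_regular e cell S.

Local Notation n := #|[set: V]|.
Local Notation ev := (@enum_val V (mem [set: V])).
Local Notation A := (adjmx R e).
Local Notation S' := (map_mx (fun m : nat => m%:R : R) S).

Lemma sum_ev (F : V -> R) : \sum_(i < n) F (ev i) = \sum_x F x.
Proof.
rewrite -(big_enum_val (A := mem [set: V])) /=.
by apply: eq_bigl => x; rewrite finset.in_setT.
Qed.

Lemma sum_delta (a : V) (F : V -> R) : \sum_y ((a == y)%:R * F y) = F a.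
Proof.
rewrite (bigD1 a) //= eqxx mul1r big1 ?addr0 // => y /negbTE.
by rewrite eq_sym => ->; rewrite mul0r.
Qed.

Lemma sum_ind (P Q : pred V) : \sum_(y | P y) (Q y)%:R = #|[set y | Q y & P y]|%:R :> R.
Proof.
rewrite -sum1_card natr_sum big_mkcond [RHS]big_mkcond /=.
apply: eq_bigr => y _; rewrite inE.
by case: (P y); case: (Q y).
Qed.

Lemma sum_part (F : V -> R) : \sum_y F y = \sum_(c < k) \sum_(y | cell y == c) F y.
Proof. exact: (partition_big cell predT). Qed.

Lemma Aentry i j : A i j = (e (ev i) (ev j))%:R.
Proof. by rewrite /adjmx /adj_on mxE. Qed.

Lemma Asym : A^T = A.
Proof. by apply/matrixP => i j; rewrite mxE !Aentry esym. Qed.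

Lemma Srow (x : V) (c : 'I_k) : \sum_(y | cell y == c) (e x y)%:R = (S (cell x) c)%:R :> R.
Proof. by rewrite sum_ind (proj2 Sreg). Qed.

Definition Pm : 'M[R]_(n, k) := \matrix_(i, j) (cell (ev i) == j)%:R.

Lemma APm : A *m Pm = Pm *m S'.
Proof.
apply/matrixP => i j; rewrite !mxE.
under eq_bigr do rewrite Aentry mxE.
under [RHS]eq_bigr do rewrite !mxE.
rewrite (sum_ev (fun y => (e (ev i) y)%:R * (cell y == j)%:R)).
rewrite [RHS](bigD1 (cell (ev i))) //= eqxx mul1r [X in _ + X]big1 ?addr0; last first.
  by move=> c /negbTE; rewrite eq_sym => ->; rewrite mul0r.
rewrite -Srow [RHS]big_mkcond /=; apply: eq_bigr => y _.
by case: (cell y == j); rewrite ?mulr1 ?mulr0.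
Qed.


Definition nc (c : 'I_k) := #|[set x | cell x == c]|.

Lemma nc_gt0 (x : V) : (0 < nc (cell x))%N.
Proof. by apply/card_gt0P; exists x; rewrite inE. Qed.

Lemma nc_neq0 (x : V) : (nc (cell x))%:R != 0 :> R.
Proof. by rewrite pnatr_eq0 -lt0n nc_gt0. Qed.

Lemma sum_ind0 (Q : pred V) : \sum_y (Q y)%:R = #|[set y | Q y]|%:R :> R.
Proof.
rewrite sum_ind; congr (_ %:R); apply: eq_card => y; by rewrite !inE andbT.
Qed.

Definition Q : 'M[R]_n :=
  \matrix_(i, i') ((cell (ev i) == cell (ev i'))%:R / (nc (cell (ev i)))%:R).

Definition mkrow (g : 'I_k -> R) : 'rV[R]_n := \row_i g (cell (ev i)).

Lemma mkrowQ g : mkrow g *m Q = mkrow g.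
Proof.
apply/rowP => i'; rewrite !mxE.
under eq_bigr do rewrite !mxE.
rewrite (sum_ev (fun y => g (cell y) * ((cell y == cell (ev i'))%:R / (nc (cell y))%:R))).
set c := cell (ev i').
transitivity (\sum_y (cell y == c)%:R * (g c / (nc c)%:R)).
  apply: eq_bigr => y _; have [->|/negbTE ne] := eqVneq (cell y) c.
    by rewrite ?eqxx /=; ring.
  by rewrite /=; ring.
rewrite -mulr_suml sum_ind0 -/(nc c) mulrCA mulfV ?mulr1 //.
exact: nc_neq0.
Qed.

Lemma rowQ (x : 'rV[R]_n) :
  x *m Q = mkrow (fun c => (\sum_i x 0 i * (cell (ev i) == c)%:R) / (nc c)%:R).
Proof.
apply/rowP => i'; rewrite !mxE mulr_suml.
apply: eq_bigr => i _; rewrite mxE.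
have [->|/negbTE ne] := eqVneq (cell (ev i)) (cell (ev i')).
  by rewrite ?eqxx /=; ring.
by rewrite /=; ring.
Qed.

Lemma QQ : Q *m Q = Q.
Proof. by apply/row_matrixP => i; rewrite row_mul rowE (rowQ (delta_mx 0 i)) mkrowQ. Qed.

Lemma Qsym : Q^T = Q.
Proof.
apply/matrixP => i j; rewrite !mxE.
have [->|ne] := eqVneq (cell (ev j)) (cell (ev i)); first by [].
by rewrite /= !mul0r.
Qed.

Lemma mkrowA g : mkrow g *m A = mkrow (fun c' => \sum_c g c * (S c' c)%:R).
Proof.
apply/rowP => i'; rewrite !mxE.
under eq_bigr do rewrite Aentry mxE.
rewrite (sum_ev (fun y => g (cell y) * (e y (ev i'))%:R)) sum_part.
apply: eq_bigr => c _; rewrite -Srow mulr_sumr.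
by apply: eq_big => // y /eqP <-; rewrite esym.
Qed.

Lemma QAQ : Q *m A *m Q = Q *m A.
Proof. by apply/row_matrixP => i; rewrite !row_mul rowE (rowQ (delta_mx 0 i)) mkrowA mkrowQ. Qed.

Lemma AQ : A *m Q = Q *m A.
Proof.
have h : (Q *m A *m Q)^T = Q *m A *m Q by rewrite !trmx_mul Qsym Asym mulmxA.
by rewrite -[RHS]QAQ -h QAQ trmx_mul Qsym Asym.
Qed.

Lemma QPm : Q *m Pm = Pm.
Proof.
have h : Pm^T *m Q = Pm^T.
  apply/row_matrixP => j; rewrite row_mul.
  have -> : row j Pm^T = mkrow (fun c => (c == j)%:R).
    by apply/rowP => i; rewrite !mxE.
  exact: mkrowQ.
by apply: (can_inj (@trmxK _ _ _)); rewrite trmx_mul Qsym h.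
Qed.


Lemma char_poly_tr (M : 'M[R]_k) : char_poly M^T = char_poly M.
Proof.
rewrite /char_poly -det_tr; congr (\det _).
by apply/matrixP => i j; rewrite !mxE eq_sym.
Qed.

Lemma ev_rank (x : V) : exists i, ev i = x.
Proof.
have xin : x \in [set: V] by rewrite finset.in_setT.
by exists (enum_rank_in xin x); rewrite enum_rankK_in.
Qed.

Lemma W_eig (v : 'rV[R]_n) (l : R) : v *m (1%:M - Q) = 0 -> v != 0 ->
  v *m A = l *: v -> eigenvalue S' l.
Proof.
move=> vW vn vA.
have vQ : v = v *m Q by apply/eqP; rewrite -subr_eq0 -{1}[v]mulmx1 -mulmxBr vW.
set g := (fun c => (\sum_i v 0 i * (cell (ev i) == c)%:R) / (nc c)%:R).
have vg : v = mkrow g by rewrite {1}vQ rowQ.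
rewrite eigenvalue_root_char -char_poly_tr -eigenvalue_root_char.
apply/eigenvalueP; exists (\row_c g c); last first.
  apply/negP => /eqP g0; move/negP: vn; apply; apply/eqP.
  rewrite vg; apply/rowP => i; rewrite !mxE.
  by move/rowP: g0 => /(_ (cell (ev i))); rewrite !mxE.
apply/rowP => c'; rewrite !mxE.
have [x0 cx0] := (proj1 Sreg) c'.
have [i0 ei0] := ev_rank x0.
move/rowP: vA => /(_ i0).
rewrite {1}vg mkrowA vg !mxE ei0 cx0 => <-.
by apply: eq_bigr => c _; rewrite !mxE.
Qed.

Definition absrow (z : 'rV[R]_n) : 'rV[R]_n := \row_i `|z 0 i|.

Lemma nrm_abs z : nrm (absrow z) = nrm z.
Proof. by rewrite !nrmE; apply: eq_bigr => i _; rewrite mxE real_normK ?num_real. Qed.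

Lemma qf_expand (z : 'rV[R]_n) : qf A z = \sum_j \sum_i z 0 i * A i j * z 0 j.
Proof.
rewrite /qf mxE; apply: eq_bigr => j _; rewrite !mxE mulr_suml.
by apply: eq_bigr => i _; rewrite mxE.
Qed.

Lemma A_ge0 i j : 0 <= A i j.
Proof. by rewrite Aentry ler0n. Qed.

Lemma abs_qf z : `|qf A z| <= qf A (absrow z).
Proof.
rewrite !qf_expand; apply: (le_trans (ler_norm_sum _ _ _)).
apply: ler_sum => j _; apply: (le_trans (ler_norm_sum _ _ _)).
apply: ler_sum => i _; rewrite !normrM (ger0_norm (A_ge0 i j)).
by rewrite /absrow !mxE.
Qed.

Lemma qf_eig (v : 'rV[R]_n) mu : v *m A = mu *: v -> qf A v = mu * nrm v.
Proof. by move=> h; rewrite /qf h -scalemxAl mxE. Qed.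

Definition onerow : 'rV[R]_n := mkrow (fun _ => 1).

Lemma Qone : Q *m onerow^T = onerow^T.
Proof. by rewrite -[Q]Qsym -trmx_mul /onerow mkrowQ. Qed.

Lemma sum_abs_gt0 (z : 'rV[R]_n) : z != 0 -> 0 < (absrow z *m onerow^T) 0 0.
Proof.
move=> zn; rewrite mxE lt_def; apply/andP; split; last first.
  by apply: sumr_ge0 => i _; rewrite !mxE mulr1 normr_ge0.
apply/negP => s0; move/negP: zn; apply; apply/eqP/rowP => i.
move: s0; rewrite psumr_eq0; last by move=> j _; rewrite !mxE mulr1 normr_ge0.
move/allP => /(_ i (mem_index_enum i)) /=; rewrite !mxE mulr1 normr_eq0.
by move/eqP ->.
Qed.

Lemma inv0 : forall u : 'rV[R]_n, u *m (0 : 'M[R]_(n, 1)) = 0 -> u *m A *m (0 : 'M[R]_(n, 1)) = 0.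
Proof. by move=> u _; rewrite mulmx0. Qed.

Lemma bulk_le_S lamS mu : largest_eigenvalue S' lamS ->
  bulk_eigenvalue e cell mu -> `|mu| <= lamS.
Proof.
move=> [_ lamSmax] [vb [vbn vbA _]].
have [th [bnd eig]] := @rayleigh R n 1 A 0 Asym inv0.
have h : exists2 u : 'rV[R]_n, u *m (0 : 'M[R]_(n, 1)) = 0 & u != 0.
  by exists vb => //; rewrite mulmx0.
have [z [_ zn zA]] := eig h.
pose y := absrow z.
have qy : qf A y = th * nrm y.
  apply/eqP; rewrite eq_le bnd ?mulmx0 //=.
  rewrite nrm_abs -(qf_eig zA); apply: le_trans (abs_qf z).
  exact: ler_norm.
have yA : y *m A = th *: y.
  apply: (@maxeig R n 1 A 0 th y Asym inv0 _ _ qy); last by rewrite mulmx0.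
  by move=> u _; apply: bnd; rewrite mulmx0.
have thS : th <= lamS.
  apply: lamSmax; apply: (@W_eig (y *m Q)).
  - by rewrite mulmxBr mulmx1 -mulmxA QQ subrr.
  - apply/negP => /eqP yQ0.
    have := sum_abs_gt0 zn; rewrite -/y -Qone mulmxA yQ0 mul0mx mxE ltxx.
    by [].
  - by rewrite -mulmxA -AQ mulmxA yA -scalemxAl.
have vbp := nrm_gt0 vbn.
have e1 : `|qf A vb| = `|mu| * nrm vb.
  by rewrite (qf_eig vbA) normrM (ger0_norm (nrm_ge0 vb)).
have h1 : `|mu| * nrm vb <= th * nrm vb.
  rewrite -e1; apply: le_trans (abs_qf vb) _.
  by rewrite -(nrm_abs vb); apply: bnd; rewrite mulmx0.
have h2 : `|mu| <= th by rewrite -(ler_pM2r vbp).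
exact: le_trans h2 thS.
Qed.

Lemma qf0 : qf A 0 = 0.
Proof. by rewrite /qf !mul0mx mxE. Qed.
Lemma nrm0 : nrm (0 : 'rV[R]_n) = 0.
Proof. by rewrite /nrm mul0mx mxE. Qed.

Lemma invP : forall u : 'rV[R]_n, u *m Pm = 0 -> u *m A *m Pm = 0.
Proof. by move=> u h; rewrite -mulmxA APm mulmxA h mul0mx. Qed.

Lemma invW : forall u : 'rV[R]_n, u *m (1%:M - Q) = 0 -> u *m A *m (1%:M - Q) = 0.
Proof.
move=> u h.
have uQ : u = u *m Q by apply/eqP; rewrite -subr_eq0 -{1}[u]mulmx1 -mulmxBr h.
by rewrite mulmxBr mulmx1 -mulmxA AQ {1}uQ !mulmxA subrr.
Qed.

Lemma bulk_bound lamB : largest_abs_bulk e cell lamB ->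
  forall u : 'rV[R]_n, u *m Pm = 0 -> qf A u <= lamB * nrm u.
Proof.
move=> [_ lB] u uP.
have [l [bnd eig]] := @rayleigh R n k A Pm Asym invP.
have [->|un] := eqVneq u 0; first by rewrite qf0 nrm0 mulr0.
have [v [vP vn vA]] := eig (ex_intro2 _ _ u uP un).
have bl : bulk_eigenvalue e cell l.
  exists v; split => // j; apply/matrixP => a b.
  rewrite [a]ord1 [b]ord1 [RHS]mxE.
  transitivity ((v *m Pm) 0 j); last by rewrite vP mxE.
  by rewrite !mxE; apply: eq_bigr => i _; rewrite !mxE.
have llB : l <= lamB := le_trans (ler_norm l) (lB l bl).
exact: le_trans (bnd u uP) (ler_wpM2r (nrm_ge0 u) llB).
Qed.

Lemma W_bound lamS : largest_eigenvalue S' lamS ->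
  forall w : 'rV[R]_n, w *m (1%:M - Q) = 0 -> qf A w <= lamS * nrm w.
Proof.
move=> [_ lS] w wW.
have [l [bnd eig]] := @rayleigh R n n A (1%:M - Q) Asym invW.
have [->|wn] := eqVneq w 0; first by rewrite qf0 nrm0 mulr0.
have [v [vP vn vA]] := eig (ex_intro2 _ _ w wW wn).
have llS : l <= lamS := lS l (W_eig vP vn vA).
exact: le_trans (bnd w wW) (ler_wpM2r (nrm_ge0 w) llS).
Qed.

Lemma cauchy_schwarz (T : finType) (P : pred T) (F : T -> R) :
  (\sum_(i | P i) F i) ^+ 2 <= #|[set i | P i]|%:R * \sum_(i | P i) F i ^+ 2.
Proof.
set s1 := \sum_(i | P i) F i; set s2 := \sum_(i | P i) F i ^+ 2.
have -> : #|[set i | P i]|%:R = \sum_(i | P i) (1 : R).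
  by rewrite -sum1_card natr_sum; apply: eq_bigl => i; rewrite inE.
set N := \sum_(i | P i) (1 : R).
have inner i : \sum_(j | P j) (F i - F j) ^+ 2 = F i ^+ 2 * N + s2 - 2 * F i * s1.
  rewrite /N /s2 /s1 !mulr_sumr -big_split -sumrB.
  by apply: eq_bigr => j _ /=; ring.
have outer : \sum_(i | P i) \sum_(j | P j) (F i - F j) ^+ 2 = 2 * (N * s2 - s1 ^+ 2).
  under eq_bigr do rewrite inner.
  rewrite sumrB big_split /= -!mulr_suml -mulr_sumr -/s1 -/s2.
  have -> : \sum_(i | P i) s2 = N * s2.
    by rewrite /N mulr_suml; apply: eq_bigr => i _; rewrite mul1r.
  ring.
have : 0 <= 2 * (N * s2 - s1 ^+ 2).
  rewrite -outer; apply: sumr_ge0 => i _; apply: sumr_ge0 => j _; exact: sqr_ge0.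
rewrite pmulr_rge0 // subr_ge0 => h; exact: h.
Qed.

Lemma cmin_le (C : {set V}) c : cmin R cell C <= cfrac R cell C c.
Proof. by rewrite /cmin (bigD1 c) //= ge_min lexx. Qed.

Lemma sum_const_cell c (K : R) : \sum_(y | cell y == c) K = (nc c)%:R * K.
Proof.
rewrite big_mkcond /= -sum_ind0 mulr_suml; apply: eq_bigr => y _.
by case: (cell y == c); rewrite /= ?mul1r ?mul0r.
Qed.

Lemma avg_bound (C : {set V}) (f : V -> R) : (forall y, y \in C -> f y = 0) ->
  nrm ((\row_i f (ev i)) *m Q) <= (1 - cmin R cell C) * nrm (\row_i f (ev i)).
Proof.
move=> fC.
rewrite rowQ.
set g := fun c => _.
have gE c : g c = (\sum_(y | cell y == c) f y) / (nc c)%:R.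
  rewrite /g; congr (_ / _).
  under eq_bigr do rewrite mxE.
  rewrite (sum_ev (fun y => f y * (cell y == c)%:R)) [RHS]big_mkcond /=.
  by apply: eq_bigr => y _; case: (cell y == c); rewrite /= ?mulr1 ?mulr0.
have L : nrm (mkrow g) = \sum_c (nc c)%:R * g c ^+ 2.
  rewrite nrmE; under eq_bigr do rewrite mxE.
  rewrite (sum_ev (fun y => g (cell y) ^+ 2)) sum_part.
  apply: eq_bigr => c _; rewrite -sum_const_cell.
  by apply: eq_bigr => y /eqP ->.
have Rr : nrm (\row_i f (ev i)) = \sum_c \sum_(y | cell y == c) f y ^+ 2.
  rewrite nrmE; under eq_bigr do rewrite mxE.
  by rewrite (sum_ev (fun y => f y ^+ 2)) sum_part.
rewrite L Rr mulr_sumr; apply: ler_sum => c _.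
set s := \sum_(y | cell y == c) f y; set q := \sum_(y | cell y == c) f y ^+ 2.
have [x0 cx0] := (proj1 Sreg) c.
have Np : 0 < (nc c)%:R :> R by rewrite ltr0n -cx0 nc_gt0.
have hs : s = \sum_(y | (cell y == c) && (y \notin C)) f y.
  rewrite [RHS]big_mkcondr; apply: eq_bigr => y _.
  by case: (boolP (y \in C)) => yC //=; rewrite fC.
have hq : q = \sum_(y | (cell y == c) && (y \notin C)) f y ^+ 2.
  rewrite [RHS]big_mkcondr; apply: eq_bigr => y _.
  by case: (boolP (y \in C)) => yC //=; rewrite fC // expr0n.
have cs := cauchy_schwarz (fun y => (cell y == c) && (y \notin C)) f.
rewrite -hs -hq in cs.
set m := #|[set y | (cell y == c) && (y \notin C)]| in cs.
have hm : (m + #|C :&: [set x | cell x == c]|)%N = nc c.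
  rewrite /nc -(cardsID C [set x | cell x == c]) addnC finset.setIC; congr (_ + _)%N.
  by apply: eq_card => y; rewrite !inE andbC.
have hc : 1 - cfrac R cell C c = m%:R / (nc c)%:R.
  have Nn : (nc c)%:R != 0 :> R by apply: lt0r_neq0.
  move: Nn; rewrite /cfrac -/(nc c) -hm natrD => Nn.
  by field.
have q0 : 0 <= q by apply: sumr_ge0 => y _; apply: sqr_ge0.
apply: (@le_trans _ _ ((1 - cfrac R cell C c) * q)); last first.
  by apply: ler_wpM2r => //; rewrite lerB // cmin_le.
rewrite gE hc.
have -> : (nc c)%:R * (s / (nc c)%:R) ^+ 2 = s ^+ 2 / (nc c)%:R.
  by field; apply: lt0r_neq0.
have -> : m%:R / (nc c)%:R * q = (m%:R * q) / (nc c)%:R by rewrite mulrAC.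
by rewrite ler_pM2r ?invr_gt0.
Qed.

Lemma main_sec (C : {set V}) (lamS lamB mu : R) :
  largest_eigenvalue S' lamS -> largest_abs_bulk e cell lamB ->
  eigenvalue (adj_on R e (~: C)) mu ->
  mu <= lamS * (1 - cmin R cell C) + lamB * cmin R cell C.
Proof.
move=> hS hB /eigenvalueP [x' x'A x'n].
pose evD := @enum_val V (mem (~: C)).
pose E : 'M[R]_(#|~: C|, n) := \matrix_(a, i) (evD a == ev i)%:R.
have EA a i' : (E *m A) a i' = (e (evD a) (ev i'))%:R.
  rewrite mxE; under eq_bigr do rewrite mxE Aentry.
  by rewrite (sum_ev (fun y => (evD a == y)%:R * (e y (ev i'))%:R)) sum_delta.
have EAE : E *m A *m E^T = adj_on R e (~: C).
  apply/matrixP => a b; rewrite /adj_on !mxE.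
  under eq_bigr do rewrite EA !mxE.
  rewrite (sum_ev (fun y => (e (evD a) y)%:R * (evD b == y)%:R)).
  under eq_bigr do rewrite mulrC.
  by rewrite sum_delta.
have EET : E *m E^T = 1%:M.
  apply/matrixP => a b; rewrite !mxE.
  rewrite (eq_bigr (fun i => (evD a == ev i)%:R * (evD b == ev i)%:R)); last first.
    by move=> i _; rewrite !mxE.
  rewrite (sum_ev (fun y => (evD a == y)%:R * (evD b == y)%:R)) sum_delta.
  by rewrite (inj_eq enum_val_inj) eq_sym.
pose f y := \sum_a x' 0 a * (evD a == y)%:R.
have fC : forall y, y \in C -> f y = 0.
  move=> y yC; rewrite /f big1 // => a _.
  have : evD a \in ~: C by exact: enum_valP.
  rewrite inE; have [->|_] := eqVneq (evD a) y; first by rewrite yC.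
  by rewrite /= mulr0.
set x := \row_i f (ev i).
have xE : x = x' *m E.
  by apply/rowP => i; rewrite !mxE; apply: eq_bigr => a _; rewrite mxE.
have nx : nrm x = nrm x'.
  by rewrite /nrm xE trmx_mul mulmxA -(mulmxA x') EET mulmx1.
have qx : qf A x = mu * nrm x.
  rewrite nx /qf xE trmx_mul !mulmxA -(mulmxA x' E) -(mulmxA x') EAE.
  by rewrite x'A -scalemxAl mxE.
have nxp : 0 < nrm x by rewrite nx nrm_gt0.
pose w := x *m Q; pose u := x - w.
have xwu : x = w + u by rewrite /u addrC subrK.
have cross1 : (w *m u^T) 0 0 = 0.
  rewrite /u /w linearD /= linearN /= mulmxDr mulmxN trmx_mul Qsym.
  by rewrite mulmxA -(mulmxA x Q Q) QQ subrr mxE.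
have cross2 : (w *m A *m u^T) 0 0 = 0.
  rewrite /u /w linearD /= linearN /= mulmxDr mulmxN trmx_mul Qsym.
  by rewrite mulmxA -!(mulmxA x Q A) -(mulmxA x (Q *m A) Q) QAQ subrr mxE.
have hn : nrm x = nrm w + nrm u by rewrite {1}xwu nrmD cross1 mulr0 addr0.
have hq : qf A x = qf A w + qf A u by rewrite {1}xwu qfD ?Asym // cross2 mulr0 addr0.
have uP : u *m Pm = 0.
  by rewrite /u /w mulmxBl -mulmxA QPm subrr.
have wW : w *m (1%:M - Q) = 0.
  by rewrite /w mulmxBr mulmx1 -mulmxA QQ subrr.
have bw := W_bound hS wW.
have bu := bulk_bound hB uP.
have [mu0 [bmu0 amu0]] := proj1 hB.
have lBS : lamB <= lamS by rewrite -amu0; exact: bulk_le_S hS bmu0.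
have av : nrm w <= (1 - cmin R cell C) * nrm x := avg_bound fC.
set c := cmin R cell C in av *.
have key : mu * nrm x <= (lamS * (1 - c) + lamB * c) * nrm x.
  rewrite -qx hq.
  have h1 : 0 <= (lamS - lamB) * ((1 - c) * nrm x - nrm w).
    by apply: mulr_ge0; rewrite subr_ge0.
  have -> : (lamS * (1 - c) + lamB * c) * nrm x =
    lamS * nrm w + lamB * (nrm x - nrm w) + (lamS - lamB) * ((1 - c) * nrm x - nrm w)
    by ring.
  have hu : nrm u = nrm x - nrm w by rewrite hn addrC addKr.
  rewrite -hu; apply: ler_wpDr => //.
  exact: lerD.
by rewrite -(ler_pM2r nxp).
Qed.

End Graph.

Theorem mainTheorem6 (R : realType) (V : finType) (e : rel V) (k : nat)
    (cell : V -> 'I_k) (S : 'M[nat]_k) (C : {set V}) (lamS lamB : R) :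
  simple_graph e -> connected_graph e -> S_regular e cell S ->
  (k < #|V|)%N ->
  C \proper [set: V] ->
  largest_eigenvalue (map_mx (fun m : nat => m%:R) S) lamS ->
  largest_abs_bulk e cell lamB ->
  forall mu : R, eigenvalue (adj_on R e (~: C)) mu ->
    mu <= lamS * (1 - cmin R cell C) + lamB * cmin R cell C.
Proof.
move=> [_ esym] _ Sreg _ _ hS hB mu hmu.
exact: (main_sec esym Sreg hS hB hmu).
Qed.
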